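(* Let $0\to M\xrightarrow{i}\Lambda\xrightarrow{d}B\to0$ be an exact sequence of lattices, $P\subset\Lambda_\mathbb{Q}$ a polyhedron, and $F\subset P$ an $M$-stable face. Then the map $i^*:\Lambda^\vee_\mathbb{Q}\to M^\vee_\mathbb{Q}$ restricts to a bijection $i^*_F:N_FP\to N_{F_M}P_M$.
   Context: Notation: $P_M=P\cap M_\mathbb{Q}$, $F_M=F\cap M_\mathbb{Q}$ (identifying $M$ with $i(M)$). For $y\in\Lambda^\vee_\mathbb{Q}$, $\mathrm{face}_y(P)=\{x\in P:\langle x,y\rangle=\min_P\langle-,y\rangle\}$; faces are the nonempty sets of this form; $N_FP=\{y\in\Lambda^\vee_\mathbb{Q}:\mathrm{face}_y(P)\supset F\}$, and analogously $N_{F_M}P_M\subset M^\vee_\mathbb{Q}$ for the face $F_M$ of $P_M$. $\langle F\rangle$ is the span of the differences of elements of $F$; $F$ is $M$-stable if the relative interior of $F$ meets $M_\mathbb{Q}$ and $\langle F\rangle+M_\mathbb{Q}=\Lambda_\mathbb{Q}$. *)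

(* Defs.v *)
(* Lattices are modelled as Z^r (row vectors of int),
   their rationalizations as row vectors over rat. Duals are row vectors
   with the standard pairing. *)
From HB Require Import structures.
From mathcomp Require Import all_boot all_order all_algebra.
Set Implicit Arguments. Unset Strict Implicit. Unset Printing Implicit Defensive.
Import Order.TTheory GRing.Theory Num.Theory.
Local Open Scope ring_scope.

Definition short_exact (m n k : nat) (i : 'M[int]_(m, n)) (d : 'M[int]_(n, k)) : Prop :=
  [/\ (forall u : 'rV[int]_m, u *m i = 0 -> u = 0),
      (forall x : 'rV[int]_n, x *m d = 0 <-> exists u : 'rV[int]_m, x = u *m i)
    & (forall b : 'rV[int]_k, exists x : 'rV[int]_n, x *m d = b)].

Definition ratmx (m n : nat) (i : 'M[int]_(m, n)) : 'M[rat]_(m, n) :=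
  map_mx (fun z : int => z%:~R) i.

Definition pair (n : nat) (x y : 'rV[rat]_n) : rat := (x *m y^T) 0 0.

(* the dual map i^* : Lambda^vee_Q -> M^vee_Q, characterized by
   pair u (i^* y) = pair (i u) y *)
Definition dualmap (m n : nat) (I : 'M[rat]_(m, n)) (y : 'rV[rat]_n) : 'rV[rat]_m :=
  y *m I^T.

Definition polyhedron (n : nat) (P : 'rV[rat]_n -> Prop) : Prop :=
  exists (p : nat) (A : 'M[rat]_(n, p)) (b : 'rV[rat]_p),
    forall x, P x <-> (forall j, b 0 j <= (x *m A) 0 j).

Definition face_y (n : nat) (P : 'rV[rat]_n -> Prop) (y : 'rV[rat]_n) : 'rV[rat]_n -> Prop :=
  fun x => P x /\ forall z, P z -> pair x y <= pair z y.

Definition is_face (n : nat) (P F : 'rV[rat]_n -> Prop) : Prop :=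
  (exists x, F x) /\ exists y, forall x, F x <-> face_y P y x.

Definition normal_cone (n : nat) (P F : 'rV[rat]_n -> Prop) : 'rV[rat]_n -> Prop :=
  fun y => forall x, F x -> face_y P y x.

(* restriction to M_Q, identifying M_Q with its image under i *)
Definition restrict (m n : nat) (I : 'M[rat]_(m, n)) (S : 'rV[rat]_n -> Prop) : 'rV[rat]_m -> Prop :=
  fun u => S (u *m I).

Definition diff_span (n : nat) (F : 'rV[rat]_n -> Prop) : 'rV[rat]_n -> Prop :=
  fun v => exists (r : nat) (c : 'I_r -> rat) (a b : 'I_r -> 'rV[rat]_n),
    (forall j, F (a j) /\ F (b j)) /\ v = \sum_(j < r) c j *: (a j - b j).

Definition relint (n : nat) (F : 'rV[rat]_n -> Prop) : 'rV[rat]_n -> Prop :=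
  fun x => F x /\ exists e : rat, 0 < e /\
    forall v, diff_span F v -> (forall j, `|v 0 j| < e) -> F (x + v).

Definition M_stable (m n : nat) (I : 'M[rat]_(m, n)) (F : 'rV[rat]_n -> Prop) : Prop :=
  (exists u : 'rV[rat]_m, relint F (u *m I)) /\
  (forall w : 'rV[rat]_n, exists v u, diff_span F v /\ w = v + u *m I).

(* Main.v *)
Require Import Defs.
From mathcomp Require Import all_boot all_order all_algebra.
From mathcomp Require Import ring lra.
Import Order.TTheory GRing.Theory Num.Theory.
Local Open Scope ring_scope.
Set Implicit Arguments. Unset Strict Implicit.

Lemma pairDl n (x x' y : 'rV[rat]_n) : pair (x + x') y = pair x y + pair x' y.
Proof. by rewrite /pair mulmxDl mxE. Qed.
Lemma pairZl n c (x y : 'rV[rat]_n) : pair (c *: x) y = c * pair x y.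
Proof. by rewrite /pair -scalemxAl mxE. Qed.
Lemma pairNl n (x y : 'rV[rat]_n) : pair (- x) y = - pair x y.
Proof. by rewrite /pair mulNmx mxE. Qed.
Lemma pairBl n (x x' y : 'rV[rat]_n) : pair (x - x') y = pair x y - pair x' y.
Proof. by rewrite pairDl pairNl. Qed.
Lemma pair0l n (y : 'rV[rat]_n) : pair 0 y = 0.
Proof. by rewrite /pair mul0mx mxE. Qed.
Lemma pair_dual m n (I : 'M[rat]_(m,n)) u y : pair u (dualmap I y) = pair (u *m I) y.
Proof. by rewrite /pair /dualmap trmx_mul trmxK mulmxA. Qed.
Lemma pair_delta n (j : 'I_n) (w : 'rV[rat]_n) : pair (delta_mx 0 j) w = w 0 j.
Proof. by rewrite /pair -rowE !mxE. Qed.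
Lemma pair_ext n (y1 y2 : 'rV[rat]_n) : (forall w, pair w y1 = pair w y2) -> y1 = y2.
Proof. by move=> H; apply/rowP => j; rewrite -!pair_delta. Qed.

Lemma span0 n (F : 'rV[rat]_n -> Prop) : diff_span F 0.
Proof.
exists 0%N, (fun _ => 0), (fun _ => 0), (fun _ => 0); split; first by move=> [].
by rewrite big_ord0.
Qed.

Lemma spanZ n (F : 'rV[rat]_n -> Prop) c v : diff_span F v -> diff_span F (c *: v).
Proof.
move=> [r [cc [a [b [Hab ->]]]]]; exists r, (fun j => c * cc j), a, b; split=> //.
by rewrite scaler_sumr; apply: eq_bigr => j _; rewrite scalerA.
Qed.

Lemma spanD n (F : 'rV[rat]_n -> Prop) v w :
  diff_span F v -> diff_span F w -> diff_span F (v + w).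
Proof.
move=> [r1 [c1 [a1 [b1 [H1 ->]]]]] [r2 [c2 [a2 [b2 [H2 ->]]]]].
pose sp := fun (T : Type) (f1 : 'I_r1 -> T) (f2 : 'I_r2 -> T) (j : 'I_(r1+r2)) =>
  match split j with inl j1 => f1 j1 | inr j2 => f2 j2 end.
exists (r1 + r2)%N, (sp _ c1 c2), (sp _ a1 a2), (sp _ b1 b2); split.
  by move=> j; rewrite /sp; case: (split j).
rewrite big_split_ord /=; congr (_ + _); apply: eq_bigr => j _; rewrite /sp.
  by rewrite (unsplitK (inl j) : split (lshift r2 j) = inl j).
by rewrite (unsplitK (inr j) : split (rshift r1 j) = inr j).
Qed.

Lemma spanB n (F : 'rV[rat]_n -> Prop) v w :
  diff_span F v -> diff_span F w -> diff_span F (v - w).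
Proof. by move=> Hv Hw; apply: spanD => //; rewrite -scaleN1r; apply: spanZ. Qed.

Lemma span2 n (F : 'rV[rat]_n -> Prop) x x0 : F x -> F x0 -> diff_span F (x - x0).
Proof.
move=> Fx Fx0; exists 1%N, (fun _ => 1), (fun _ => x), (fun _ => x0); split=> //.
by rewrite big_ord1 scale1r.
Qed.

Lemma span_sum n (F : 'rV[rat]_n -> Prop) r (f : 'I_r -> 'rV[rat]_n) :
  (forall j, diff_span F (f j)) -> diff_span F (\sum_j f j).
Proof.
move=> H; apply: (big_ind (diff_span F)) => //; [exact: span0 | exact: spanD].
Qed.

Lemma nc_span n (P F : 'rV[rat]_n -> Prop) y v :
  normal_cone P F y -> diff_span F v -> pair v y = 0.
Proof.
move=> Hy [r [c [a [b [Hab ->]]]]].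
rewrite /pair mulmx_suml summxE big1 // => j _.
rewrite -scalemxAl mxE -/(pair _ _) pairBl.
have [Fa Fb] := Hab j; have [Pa Ha] := Hy _ Fa; have [Pb Hb] := Hy _ Fb.
have h1 := Ha _ Pb; have h2 := Hb _ Pa.
have -> : pair (a j) y = pair (b j) y by apply/eqP; rewrite eq_le h1 h2.
by rewrite subrr mulr0.
Qed.

Lemma small_scale n (e : rat) (v : 'rV[rat]_n) : 0 < e ->
  exists s : rat, [/\ 0 < s, s <= 1 & forall j, `|(s *: v) 0 j| < e].
Proof.
move=> e0; set S := \sum_j `|v 0 j|.
have S0 : 0 <= S by apply: sumr_ge0 => j _.
have D0 : 0 < e + 1 + S by lra.
exists (e / (e + 1 + S)); split.
- by rewrite divr_gt0.
- by rewrite ler_pdivrMr // mul1r; lra.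
- move=> j; rewrite mxE normrM gtr0_norm ?divr_gt0 //.
  have vS : `|v 0 j| <= S.
    rewrite /S (bigD1 j) //= lerDl; exact: sumr_ge0.
  rewrite -mulrA mulrC gtr_pMl // mulrC ltr_pdivrMr // mul1r; lra.
Qed.

Lemma poly_conv n (P : 'rV[rat]_n -> Prop) a b t : polyhedron P -> P a -> P b ->
  0 <= t -> t <= 1 -> P ((1 - t) *: a + t *: b).
Proof.
move=> [p [A [bb H]]] /H Ha /H Hb t0 t1; apply/H => j.
rewrite mulmxDl -!scalemxAl mxE [X in _ <= X + _]mxE [X in _ <= _ + X]mxE.
have := Ha j; have := Hb j; move=> h1 h2; nra.
Qed.

Unset Implicit Arguments. Set Strict Implicit.

Theorem mainTheorem5 (m n k : nat) (i : 'M[int]_(m, n)) (d : 'M[int]_(n, k))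
  (P F : 'rV[rat]_n -> Prop) :
  short_exact i d ->
  polyhedron P ->
  is_face P F ->
  M_stable (ratmx i) F ->
  let I := ratmx i in
  [/\ (forall y, normal_cone P F y ->
         normal_cone (restrict I P) (restrict I F) (dualmap I y)),
      (forall y1 y2, normal_cone P F y1 -> normal_cone P F y2 ->
         dualmap I y1 = dualmap I y2 -> y1 = y2)
    & (forall z, normal_cone (restrict I P) (restrict I F) z ->
         exists2 y, normal_cone P F y & dualmap I y = z)].
Proof.
move=> _ Hpoly [_ [y0 HF]] [[u0 [Fx0 [e [e0 He]]]] Hst] I.
have FP : forall x, F x -> P x by move=> x /HF [].
split.
- move=> y Hy u Fu; split; first exact: (proj1 (Hy _ Fu)).
  move=> w Pw; rewrite !pair_dual; exact: (proj2 (Hy _ Fu)).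
- move=> y1 y2 H1 H2 Heq; apply: pair_ext => w.
  have [v [u [Hv ->]]] := Hst w.
  by rewrite !pairDl (nc_span H1 Hv) (nc_span H2 Hv) -!pair_dual Heq.
move=> z Hz.
have cons : forall u, diff_span F (u *m I) -> pair u z = 0.
  move=> u Hs; have [s [s0 _ Hs']] := small_scale (u *m I) e0.
  have := He (s *: (u *m I)) (spanZ s Hs) Hs'.
  rewrite scalemxAl -mulmxDl => Fs.
  have [P0 H0] := Hz u0 Fx0; have [Ps Hs2] := Hz _ Fs.
  have h1 := H0 _ Ps; have h2 := Hs2 _ P0.
  move: h1 h2; rewrite pairDl pairZl => h1 h2.
  have : s * pair u z = 0 by lra.
  by move/eqP; rewrite mulf_eq0 gt_eqF //= => /eqP.
have [vv Hvv] := fin_all_exists (fun j : 'I_n => Hst (delta_mx 0 j)).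
have [uu Huu] := fin_all_exists Hvv.
pose V := \matrix_j vv j; pose U := \matrix_j uu j.
pose y := z *m U^T.
have dec : 1%:M = V + U *m I.
  apply/row_matrixP => j; rewrite row1 linearD /= row_mul !rowK.
  by have [_ ->] := Huu j.
have key : forall w v u, diff_span F v -> w = v + u *m I -> pair w y = pair u z.
  move=> w v u Hv Hw.
  have Hy : pair w y = pair (w *m U) z by rewrite /pair /y trmx_mul trmxK mulmxA.
  have Hd : w = w *m V + (w *m U) *m I by rewrite -mulmxA -mulmxDr -dec mulmx1.
  have HV : diff_span F (w *m V).
    rewrite mulmx_sum_row; apply: span_sum => j; rewrite rowK; apply: spanZ.
    by have [] := Huu j.
  have : diff_span F ((u - w *m U) *m I).
    have -> : (u - w *m U) *m I = w *m V - v.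
      have E : v + u *m I = w *m V + w *m U *m I by rewrite -Hw.
      by rewrite mulmxBl -[u *m I](addKr v) E addrA addrK addrC.
    exact: spanB.
  by move/cons; rewrite pairBl Hy => /eqP; rewrite subr_eq0 => /eqP ->.
have spanY : forall v, diff_span F v -> pair v y = 0.
  by move=> v Hv; rewrite (key v v 0) ?pair0l // mul0mx addr0.
exists y; last first.
  apply: pair_ext => u; rewrite pair_dual (key _ 0 u) //; first exact: span0.
  by rewrite add0r.
move=> x Fx; split; first exact: FP.
move=> p Pp.
set x0 := u0 *m I.
have Hxx : pair x y = pair x0 y.
  by apply/eqP; rewrite -subr_eq0 -pairBl spanY //; apply: span2.
have Hp : pair p y = pair x0 y + pair (p - x0) y by rewrite -pairDl addrC subrK.
rewrite Hxx Hp lerDl.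
have [v [u [Hv Hw]]] := Hst (p - x0).
rewrite (key _ _ _ Hv Hw).
have [s [s0 s1 Hs']] := small_scale (- v) e0.
have Hnv : diff_span F (- v) by rewrite -scaleN1r; apply: spanZ.
have FB := He _ (spanZ s Hnv) Hs'.
have PA := poly_conv Hpoly (FP _ Fx0) Pp (ltW s0) s1.
have h0 : (0 : rat) <= 1/2 by lra.
have h1 : (1/2 : rat) <= 1 by lra.
have PC := poly_conv Hpoly PA (FP _ FB) h0 h1.
have EC : (1 - 1/2) *: ((1 - s) *: x0 + s *: p) + 1/2 *: (x0 + s *: - v)
    = (u0 + (s/2) *: u) *m I.
  have Ep : p = x0 + (v + u *m I) by rewrite -Hw addrC subrK.
  rewrite Ep mulmxDl -scalemxAl -/x0.
  apply/rowP => j; by rewrite !mxE; field.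
rewrite EC in PC.
have [P0 H0] := Hz u0 Fx0.
have := H0 _ PC; rewrite pairDl pairZl lerDl.
by rewrite pmulr_rge0 // divr_gt0.
Qed.
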